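(* Consider the general LPP model described in the context, fix $\eta_0\in(0,\infty)$, $u\in\mathbb{R}$, set $\eta=\eta_0+ut^{-2/3}$, and suppose Assumptions A1 and A2 hold. Let $D$ be a probability distribution. If, as $t\to\infty$, $$\frac{L_{\mathcal{L}^-\to(\eta t,t)}-\mu t}{t^{1/3}}-\frac{L_{\mathcal{L}^+\to E^+}+L_{E^+\to(\eta t,t)}-\mu t}{t^{1/3}}\Rightarrow D,$$ then $$\frac{L_{\mathcal{L}^-\to(\eta t,t)}-\mu t}{t^{1/3}}-\frac{L_{\mathcal{L}^+\to(\eta t,t)}-\mu t}{t^{1/3}}\Rightarrow D.$$
   Context: LPP: for independent nonnegative $\{\omega_{i,j}\}$, an up-right path is a sequence of points of $\mathbb{Z}^2$ with increments in $\{(1,0),(0,1)\}$; $L_{S_A\to S_E}=\max_\pi\sum_{(i,j)\in\pi\setminus S_A}\omega_{i,j}$ over up-right paths from $S_A$ to $S_E$ ($-\infty$ if none); for points $A,B$ write $L_{A\to B}$; non-integer coordinates are understood as integer parts. General model: integers $x_k(0)$, $k\in\mathbb{Z}$, with $x_{k+1}(0)<x_k(0)$, $x_0(0)=1$, $x_1(0)<-1$; $\omega_{i,j}$ independent exponential with rate $v_j>0$; $\mathcal{L}^+=\{(k+x_k(0),k):k>0\}$, $\mathcal{L}^-=\{(k+x_k(0),k):k\le0\}$. Assumption A1: there exist $\mu\in\mathbb{R}$ and continuous distribution functions $G_1(\cdot;u),G_2(\cdot;u)$ with $\lim_{t\to\infty}\mathbb{P}((L_{\mathcal{L}^+\to(\eta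 t,t)}-\mu t)/t^{1/3}\le s)=G_1(s;u)$ and $\lim_{t\to\infty}\mathbb{P}((L_{\mathcal{L}^-\to(\eta t,t)}-\mu t)/t^{1/3}\le s)=G_2(s;u)$ for all $s$. Assumption A2: there exist $\kappa,\mu_0\in\mathbb{R}$, $\nu\in(1/3,1)$ and a continuous distribution function $G_0(\cdot;u)$ such that, with $E^+=(\eta t-\kappa t^\nu,t-t^\nu)$, for all $s$: $\lim_{t\to\infty}\mathbb{P}((L_{E^+\to(\eta t,t)}-\mu_0t^\nu)/t^{\nu/3}\le s)=G_0(s;u)$ and $\lim_{t\to\infty}\mathbb{P}((L_{\mathcal{L}^+\to E^+}-\mu t+\mu_0t^\nu)/t^{1/3}\le s)=G_1(s;u)$. ''$\Rightarrow$'' denotes convergence in distribution. *)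

(* Defs.v *)
From HB Require Import structures.
From mathcomp Require Import all_boot all_order all_algebra.
From mathcomp Require Import all_classical all_reals all_analysis.
Set Implicit Arguments. Unset Strict Implicit. Unset Printing Implicit Defensive.
Import Order.TTheory GRing.Theory Num.Theory.
Import numFieldTopology.Exports.
Local Open Scope classical_set_scope.
Local Open Scope ring_scope.

Definition mutually_independent d (T : measurableType d) (R : realType)
  (P : probability T R) (I : eqType) (X : I -> T -> R) : Prop :=
  forall (s : seq I) (B : I -> set R), uniq s -> (forall i, measurable (B i)) ->
    P [set w | forall i, i \in s -> B i (X i w)] =
    (\prod_(i <- s) P (X i @^-1` B i))%E.

Definition up_right_step (p q : int * int) : bool :=
  (q == (p.1 + 1, p.2)) || (q == (p.1, p.2 + 1)).

(** LPP value L_{SA -> SE}: supremum over up-right paths a :: s with a in SA,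
    last point in SE, of the sum of weights over the points of the path not in
    SA; -oo if there is no such path (ereal_sup of the empty set). *)
Definition LPP (R : realType) (om : int * int -> R) (SA SE : set (int * int))
  : \bar R :=
  ereal_sup [set y | exists (a : int * int) (s : seq (int * int)),
    [/\ SA a, path up_right_step a s, SE (last a s) &
        y = (\sum_(p <- a :: s | p \notin SA) om p)%:E]].

Definition ipt (R : realType) (a b : R) : int * int := (Num.floor a, Num.floor b).

Definition Lplus (x : int -> int) : set (int * int) :=
  [set z | exists k : int, 0 < k /\ z = (k + x k, k)].
Definition Lminus (x : int -> int) : set (int * int) :=
  [set z | exists k : int, k <= 0 /\ z = (k + x k, k)].

Definition eta_t (R : realType) (eta0 u t : R) : R := eta0 + u * t `^ (- (2 / 3)).
Definition endpt (R : realType) (eta0 u t : R) : int * int :=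
  ipt (eta_t eta0 u t * t) t.
Definition Eplus (R : realType) (eta0 u kappa nu t : R) : int * int :=
  ipt (eta_t eta0 u t * t - kappa * t `^ nu) (t - t `^ nu).

Definition rescale (R : realType) (a t c : R) (X : \bar R) : \bar R :=
  ((X - c%:E) * ((t `^ a)^-1)%:E)%E.

Definition cont_distr_fun (R : realType) (G : R -> R) : Prop :=
  [/\ continuous G, {homo G : x y / x <= y},
      G x @[x --> -oo] --> (0:R) & G x @[x --> +oo] --> (1:R)].

Definition cvg_distr d (T : measurableType d) (R : realType) (P : probability T R)
  (X : R -> T -> \bar R) (D : probability R R) : Prop :=
  forall s : R, {for s, continuous (fun r => fine (D `]-oo, r]%classic))} ->
    (fun t => P [set w | (X t w <= s%:E)%E]) @ +oo --> D `]-oo, s]%classic.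

(* Main.v *)
Require Import Defs.
From HB Require Import structures.
From mathcomp Require Import all_boot all_order all_algebra.
From mathcomp Require Import all_classical all_reals all_analysis.
From mathcomp Require Import measurable_realfun.
From mathcomp Require Import ring lra zify.
Import Order.TTheory GRing.Theory Num.Theory.
Import numFieldTopology.Exports.
Local Open Scope classical_set_scope.
Local Open Scope ring_scope.
Set Implicit Arguments. Unset Strict Implicit. Unset Printing Implicit Defensive.
Lemma ecvg_near (R : realType) (f : R -> \bar R) (l e : R) :
  f t @[t --> +oo] --> l%:E -> 0 < e ->
  \forall t \near +oo, ((l - e)%:E <= f t <= (l + e)%:E)%E.
Proof.
move=> /fine_cvgP [ffin fc] e0.
move: (fc) => /cvgr_dist_lt/(_ _ e0) h.
near=> t.
have ft : f t \is a fin_num by near: t.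
have : `|l - fine (f t)| < e by near: t.
rewrite -(fineK ft) !lee_fin => /ltW; rewrite ler_norml; move=> /andP[h1 h2].
apply/andP; split; lra.
Unshelve. all: end_near. Qed.

Lemma mle d (T : measurableType d) (R : realType) (X : T -> \bar R) (s : R) :
  measurable_fun setT X -> measurable [set w | (X w <= s%:E)%E].
Proof.
move=> mX.
have := mX measurableT `]-oo, s%:E]%classic (emeasurable_itv _).
rewrite setTI.
by congr measurable; apply/seteqP; split => w /=; rewrite in_itv /=.
Qed.

Lemma mgt d (T : measurableType d) (R : realType) (X : T -> \bar R) (s : R) :
  measurable_fun setT X -> measurable [set w | (s%:E < X w)%E].
Proof.
move=> mX.
have := mX measurableT `]s%:E, +oo%E]%classic (emeasurable_itv _).
rewrite setTI.
by congr measurable; apply/seteqP; split => w /=; rewrite in_itv /= ?leey ?andbT.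
Qed.

Definition pr d (T : measurableType d) (R : realType) (P : probability T R)
  (A : set T) : R := fine (P A).
Arguments pr {d T R} P A.

Lemma prE d (T : measurableType d) (R : realType) (P : probability T R) A :
  measurable A -> P A = (pr P A)%:E.
Proof.
move=> mA; rewrite /pr fineK //.
rewrite ge0_fin_numE; last exact: measure_ge0.
exact: (le_lt_trans (probability_le1 P mA) (ltry 1)).
Qed.

Lemma pr_ge0 d (T : measurableType d) (R : realType) (P : probability T R) A :
  measurable A -> 0 <= pr P A.
Proof. by move=> mA; rewrite -lee_fin -prE. Qed.

Lemma pr_le d (T : measurableType d) (R : realType) (P : probability T R) A B :
  measurable A -> measurable B -> A `<=` B -> pr P A <= pr P B.
Proof.
move=> mA mB AB; rewrite -lee_fin -!prE //.
by apply: le_measure => //; rewrite inE.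
Qed.

Lemma pr_U d (T : measurableType d) (R : realType) (P : probability T R) A B :
  measurable A -> measurable B -> pr P (A `|` B) <= pr P A + pr P B.
Proof.
move=> mA mB; rewrite -lee_fin EFinD -!prE //; last exact: measurableU.
exact: measureU2.
Qed.

Lemma pr_disj d (T : measurableType d) (R : realType) (P : probability T R) A B :
  measurable A -> measurable B -> A `&` B = set0 ->
  pr P (A `|` B) = pr P A + pr P B.
Proof.
move=> mA mB AB; apply/EFin_inj; rewrite EFinD -!prE //; last exact: measurableU.
exact: measureU.
Qed.

Lemma pr_C d (T : measurableType d) (R : realType) (P : probability T R) A :
  measurable A -> pr P (~` A) = 1 - pr P A.
Proof.
move=> mA; apply/EFin_inj; rewrite EFinB -!prE //; last exact: measurableC.
exact: probability_setC.
Qed.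

Lemma pr_bigU d (T : measurableType d) (R : realType) (P : probability T R)
  (A : nat -> set T) n :
  (forall i, measurable (A i)) ->
  pr P (\big[setU/set0]_(i < n) A i) <= \sum_(i < n) pr P (A i).
Proof.
move=> mA.
have mU : measurable (\big[setU/set0]_(i < n) A i).
  by apply: bigsetU_measurable => i _.
rewrite -lee_fin -prE //.
have -> : ((\sum_(i < n) pr P (A i))%:E = \sum_(i < n) P (A i))%E.
  by rewrite -sumEFin; apply: eq_bigr => i _; rewrite -prE.
exact: le_mu_bigsetU.
Qed.

Arguments prE {d T R} P {A}.
Arguments pr_ge0 {d T R} P {A}.
Arguments pr_le {d T R} P {A B}.
Arguments pr_U {d T R} P {A B}.
Arguments pr_disj {d T R} P {A B}.
Arguments pr_C {d T R} P {A}.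
Arguments pr_bigU {d T R} P {A} n.

Lemma pr_cvg d (T : measurableType d) (R : realType) (P : probability T R)
  (E : R -> set T) (l e : R) :
  (forall t, measurable (E t)) ->
  (fun t => P (E t)) @ +oo --> l%:E -> 0 < e ->
  \forall t \near +oo, l - e <= pr P (E t) <= l + e.
Proof.
move=> mE h e0; have := ecvg_near h e0.
apply: filterS => t; rewrite prE // !lee_fin //.
Qed.

Lemma cdf_lo (R : realType) (G : R -> R) (e a0 : R) :
  cont_distr_fun G -> 0 < e -> exists a, a <= a0 /\ G a <= e.
Proof.
move=> [_ _ hlo _] e0.
move: hlo => /cvgr_dist_lt/(_ _ e0) h1.
have h2 : \forall x \near -oo, x <= a0 by apply: nbhs_ninfty_le; exact: num_real.
have [x [/ltW + xa]] := filter_ex (filterI h1 h2).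
rewrite sub0r normrN => h; exists x; split => //.
exact: le_trans (ler_norm _) h.
Qed.

Lemma cdf_hi (R : realType) (G : R -> R) (e b0 : R) :
  cont_distr_fun G -> 0 < e -> exists b, b0 <= b /\ 1 - e <= G b.
Proof.
move=> [_ _ _ hhi] e0.
move: hhi => /cvgr_dist_lt/(_ _ e0) h1.
have h2 : \forall x \near +oo, b0 <= x by apply: nbhs_pinfty_ge; exact: num_real.
have [x [/ltW + xa]] := filter_ex (filterI h1 h2).
rewrite ler_norml => /andP[h h']; exists x; split => //; lra.
Qed.

Lemma grid_index (R : realType) (a h y : R) (m : nat) :
  0 < h -> a < y -> y <= a + m%:R * h ->
  exists j : 'I_m, a + j%:R * h < y <= a + (j.+1)%:R * h.
Proof.
move=> h0 ay; elim: m => [|m IH].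
  by rewrite mul0r addr0 => ya; lra.
move=> ym; have [ym'|ym'] := leP y (a + m%:R * h).
  have [j hj] := IH ym'; exists (widen_ord (leqnSn m) j) => //.
exists ord_max => /=; apply/andP; split => //.
Qed.

Lemma cont_grid (R : realType) (G : R -> R) (m : nat) (s : 'I_m -> R) (e d0 : R) :
  continuous G -> 0 < e -> 0 < d0 ->
  exists dl, [/\ 0 < dl, dl <= d0 & forall j, G (s j + dl) <= G (s j) + e].
Proof.
move=> cG e0 d00.
have hj : forall j : 'I_m, \forall dl \near 0^'+, G (s j + dl) <= G (s j) + e.
  move=> j; have := cG (s j); move=> /cvgr_dist_lt/(_ _ e0).
  move/nbhs0P => h.
  have : \forall dl \near 0^'+, `|G (s j) - G (s j + dl)| < e.
    by move: h; apply: filterS => x Px _.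
  apply: filterS => x; rewrite ltr_norml => /andP[h1 h2]; lra.
have h : \forall x \near 0^'+, forall j, G (s j + x) <= G (s j) + e.
  by apply: filter_forall.

have [x [[hx1 hx2] hx3]] := filter_ex (filterI (filterI (nbhs_right_gt 0) (nbhs_right_le d00)) h).
by exists x.
Qed.


Lemma ptY (R : realType) (Y : \bar R) (c dl q M1 M2 : R) :
  `|c| < q -> q * (M2 - M1) = dl -> M1 <= -1 -> 1 <= M2 ->
  ~ (Y <= M1%:E)%E -> (Y <= M2%:E)%E -> exists y, Y = y%:E /\ `|c * y| <= dl.
Proof.
move=> cq qM M1l M2g.
case: Y => [y| |] //; last by move=> h; exfalso; apply: h; rewrite leNye.
rewrite !lee_fin => /negP; rewrite -ltNge => h1 h2; exists y; split => //.
rewrite normrM -qM; apply: ler_pM => //.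
  exact: ltW.
rewrite ler_norml; apply/andP; split; lra.
Qed.

Lemma pt1 (R : realType) (C B C1 Y : \bar R) (c s dl q M1 M2 K : R) :
  (C <= B)%E -> (C1 \is a fin_num -> Y \is a fin_num -> C = C1 + c%:E * Y)%E ->
  `|c| < q -> q * (M2 - M1) = dl -> M1 <= -1 -> 1 <= M2 ->
  ~ (Y <= M1%:E)%E -> (Y <= M2%:E)%E -> (C1 <= K%:E)%E -> (B <= s%:E)%E ->
  (C1 <= (s + dl)%:E)%E.
Proof.
move=> CB rel cq qM M1l M2g Y1 Y2 C1K Bs.
have [y [Yy cy]] := ptY cq qM M1l M2g Y1 Y2.
move: rel C1K; case: C1 => [x| |]; last 2 first.
- by move=> _; rewrite leye_eq.
- by move=> _ _; rewrite leNye.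
move=> /(_ isT); rewrite Yy => /(_ isT) Ce _.
have : (C <= s%:E)%E := le_trans CB Bs.
rewrite Ce -EFinM -EFinD !lee_fin => h.
move: cy; rewrite ler_norml => /andP[h1 h2]; lra.
Qed.

Lemma pt2 (R : realType) (C B Y : \bar R) (x c dl q M1 M2 lo hi eps : R) :
  (C <= B)%E -> (Y \is a fin_num -> C = x%:E + c%:E * Y)%E ->
  `|c| < q -> q * (M2 - M1) = dl -> M1 <= -1 -> 1 <= M2 ->
  ~ (Y <= M1%:E)%E -> (Y <= M2%:E)%E -> lo < x <= hi -> (B <= hi%:E)%E ->
  hi - lo + dl <= eps ->
  exists bb cc : R, [/\ B = bb%:E, C = cc%:E & cc <= bb <= cc + eps].
Proof.
move=> CB rel cq qM M1l M2g Y1 Y2 /andP[lx xh] Bh he.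
have [y [Yy cy]] := ptY cq qM M1l M2g Y1 Y2.
move: rel; rewrite Yy => /(_ isT) Ce.
move: CB Bh; rewrite Ce -EFinM -EFinD; case: B => [bb| |] //.
  rewrite !lee_fin => h1 h2; exists bb, (x + c * y); split => //.
  move: cy; rewrite ler_norml => /andP[h3 h4]; apply/andP; split; lra.
Qed.


Lemma nearI (R : realType) (A B : R -> Prop) :
  (\forall t \near +oo, A t) -> (\forall t \near +oo, B t) ->
  \forall t \near +oo, A t /\ B t.
Proof. by move=> ha hb; apply: filterI. Qed.

Lemma nearS (R : realType) (A B : R -> Prop) :
  (forall t, A t -> B t) -> (\forall t \near +oo, A t) -> \forall t \near +oo, B t.
Proof. by move=> hab ha; apply: filterS ha. Qed.

Lemma mU d (T : measurableType d) (A B : set T) :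
  measurable A -> measurable B -> measurable (A `|` B).
Proof. exact: measurableU. Qed.
Lemma mI d (T : measurableType d) (A B : set T) :
  measurable A -> measurable B -> measurable (A `&` B).
Proof. exact: measurableI. Qed.

Lemma core1 d (T : measurableType d) (R : realType) (P : probability T R)
  (B C C1 Y : R -> T -> \bar R) (c : R -> R) (G0 G1 : R -> R) :
  cont_distr_fun G0 -> cont_distr_fun G1 ->
  (forall t, measurable_fun setT (B t)) ->
  (forall t, measurable_fun setT (C1 t)) ->
  (forall t, measurable_fun setT (Y t)) ->
  (forall s, (fun t => P [set w | (B t w <= s%:E)%E]) @ +oo --> (G1 s)%:E) ->
  (forall s, (fun t => P [set w | (C1 t w <= s%:E)%E]) @ +oo --> (G1 s)%:E) ->
  (forall s, (fun t => P [set w | (Y t w <= s%:E)%E]) @ +oo --> (G0 s)%:E) ->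
  c t @[t --> +oo] --> 0 ->
  (\forall t \near +oo, forall w, (C t w <= B t w)%E /\
      (C1 t w \is a fin_num -> Y t w \is a fin_num ->
       C t w = (C1 t w + (c t)%:E * Y t w)%E)) ->
  forall eps eta : R, 0 < eps -> 0 < eta ->
  \forall t \near +oo, exists U : set T, [/\ measurable U, pr P U <= eta &
     forall w, ~ U w -> exists b cc : R,
       [/\ B t w = b%:E, C t w = cc%:E & cc <= b <= cc + eps]].
Proof.
move=> hG0 hG1 mB mC1 mY cB cC1 cY cc hrel eps eta eps0 eta0.
have e32 : 0 < eta / 32 by apply: divr_gt0.
have [a [_ Ga]] := cdf_lo 0 hG1 e32.
have [b [ab Gb]] := cdf_hi (a + 1) hG1 e32.
pose m := (Num.Def.archi_bound ((b - a) * 2 / eps)).+1.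
have m0 : (0 < m%:R :> R) by rewrite ltr0n.
have hm : (b - a) * 2 / eps < m%:R.
  apply: (lt_le_trans (archi_boundP _)).
    by apply: divr_ge0 => //; last exact: ltW; apply: mulr_ge0 => //; lra.
  by rewrite ler_nat.
pose hh := (b - a) / m%:R.
have h0 : 0 < hh by apply: divr_gt0 => //; lra.
have hle : hh <= eps / 2.
  rewrite /hh ler_pdivrMr //.
  move: hm; rewrite ltr_pdivrMr // => hm; nra.
have bmh : b = a + m%:R * hh by rewrite /hh mulrC divfK ?gt_eqF //; lra.
pose u := eta / 16 / m%:R.
have u0 : 0 < u by rewrite /u !divr_gt0.
have mu16 : m%:R * u = eta / 16 by rewrite /u mulrC divfK // gt_eqF.
pose sn (n : nat) := a + (n.+1)%:R * hh.
have [dl [dl0 dleps Gdl]] := cont_grid (fun j : 'I_m => sn j) (let: And4 x _ _ _ := hG1 in x)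
  u0 (divr_gt0 eps0 (ltr0n _ 2)).
have u2 : 0 < u / 2 by apply: divr_gt0.
have [M1 [M1le GM1]] := cdf_lo (-1) hG0 u2.
have [M2 [M2ge GM2]] := cdf_hi 1 hG0 u2.
have [K [bK GK]] := cdf_hi b hG1 u2.
pose q := dl / (M2 - M1).
have q0 : 0 < q by apply: divr_gt0 => //; lra.
have qM : q * (M2 - M1) = dl by rewrite /q divfK // gt_eqF //; lra.
have N1 := pr_cvg (E := fun t => [set w | (C1 t w <= a%:E)%E]) (fun t => mle a (mC1 t)) (cC1 a) e32.
have N2 := pr_cvg (E := fun t => [set w | (C1 t w <= b%:E)%E]) (fun t => mle b (mC1 t)) (cC1 b) e32.
have N3 := pr_cvg (E := fun t => [set w | (Y t w <= M1%:E)%E]) (fun t => mle M1 (mY t)) (cY M1) u2.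
have N4 := pr_cvg (E := fun t => [set w | (Y t w <= M2%:E)%E]) (fun t => mle M2 (mY t)) (cY M2) u2.
have N5 := pr_cvg (E := fun t => [set w | (C1 t w <= K%:E)%E]) (fun t => mle K (mC1 t)) (cC1 K) u2.
have N6 : \forall t \near +oo, forall j : 'I_m,
    pr P [set w | (C1 t w <= (sn j + dl)%:E)%E] <= G1 (sn j + dl) + u.
  apply: filter_forall => j.
  have := pr_cvg (E := fun t => [set w | (C1 t w <= (sn j + dl)%:E)%E])
    (fun t => mle _ (mC1 t)) (cC1 _) u0.
  by apply: filterS => t /andP[].
have N7 : \forall t \near +oo, forall j : 'I_m,
    G1 (sn j) - u <= pr P [set w | (B t w <= (sn j)%:E)%E].
  apply: filter_forall => j.
  have := pr_cvg (E := fun t => [set w | (B t w <= (sn j)%:E)%E])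
    (fun t => mle _ (mB t)) (cB _) u0.
  by apply: filterS => t /andP[].
have N8 : \forall t \near +oo, `|c t| < q.
  move: cc => /cvgr_dist_lt/(_ _ q0); apply: filterS => t.
  by rewrite sub0r normrN.
have Nall := nearI N1 (nearI N2 (nearI N3 (nearI N4 (nearI N5 (nearI N6 (nearI N7 (nearI N8 hrel))))))).
apply: (nearS _ Nall).
move=> t [H1 [H2 [H3 [H4 [H5 [E6 [E7 [E8 E9]]]]]]]].
move/andP: H1 => [_ E1]; move/andP: H2 => [E2 _]; move/andP: H3 => [_ E3].
move/andP: H4 => [E4 _]; move/andP: H5 => [E5 _].
pose A1 := [set w | (C1 t w <= a%:E)%E].
pose A2 := [set w | (C1 t w <= b%:E)%E].
pose Y1 := [set w | (Y t w <= M1%:E)%E].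
pose Y2 := [set w | (Y t w <= M2%:E)%E].
pose K1 := [set w | (C1 t w <= K%:E)%E].
pose F (n : nat) := [set w | (C1 t w <= (sn n)%:E)%E] `&` [set w | ((sn n)%:E < B t w)%E].
have mA1 : measurable A1 := mle _ (mC1 t).
have mA2 : measurable A2 := mle _ (mC1 t).
have mY1 : measurable Y1 := mle _ (mY t).
have mY2 : measurable Y2 := mle _ (mY t).
have mK1 : measurable K1 := mle _ (mC1 t).
have mF : forall n, measurable (F n).
  by move=> n; apply: measurableI; [exact: mle | exact: mgt].
have mBF : measurable (\big[setU/set0]_(j < m) F j).
  by apply: bigsetU_measurable => i _.
pose Bad := Y1 `|` ~` Y2 `|` ~` K1.
have mBad : measurable Bad.
  by apply: measurableU; [apply: measurableU => //|]; exact: measurableC.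
have pY2 : pr P (~` Y2) <= u by rewrite pr_C //; lra.
have pK1 : pr P (~` K1) <= u by rewrite pr_C //; lra.
have pBad : pr P Bad <= 3 * u.
  have s1 := pr_U P (mU mY1 (measurableC mY2)) (measurableC mK1).
  have s2 := pr_U P mY1 (measurableC mY2).
  rewrite /Bad; lra.
have Fj : forall j : 'I_m, pr P (F j) <= 6 * u.
  move=> j.
  pose Bs := [set w | (B t w <= (sn j)%:E)%E].
  have mBs : measurable Bs := mle _ (mB t).
  have mBG : measurable (Bs `&` ~` Bad) by apply: measurableI => //; exact: measurableC.
  have inc1 : F j `|` (Bs `&` ~` Bad) `<=` [set w | (C1 t w <= (sn j + dl)%:E)%E].
    move=> w [[h1 _]|[h1 h2]] /=.
      by apply: (le_trans h1); rewrite lee_fin lerDl ltW.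
    have [CB rel] := E9 w.
    have nY1 : ~ Y1 w by move=> h; apply: h2; left; left.
    have nY2 : Y2 w.
      by case: (boolP (Y t w <= M2%:E)%E) => // h; exfalso; apply: h2; left; right; exact/negP.
    have nK1 : K1 w.
      by case: (boolP (C1 t w <= K%:E)%E) => // h; exfalso; apply: h2; right; exact/negP.
    exact: (pt1 CB rel E8 qM M1le M2ge nY1 nY2 nK1 h1).
  have disj : F j `&` (Bs `&` ~` Bad) = set0.
    apply/seteqP; split => // w [[_ h1] [h2 _]].
    by move: h1; rewrite /= ltNge h2.
  have ineq1 := pr_le P (mU (mF j) mBG) (mle _ (mC1 t)) inc1.
  rewrite pr_disj // in ineq1.
  have inc2 : Bs `<=` (Bs `&` ~` Bad) `|` Bad.
    move=> w Bw; have [h|h] := pselect (Bad w); first by right.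
    by left.
  have ineq2 := pr_le P mBs (mU mBG mBad) inc2.
  have ineq3 := pr_U P mBG mBad.
  have g1 := Gdl j.
  have g2 := E6 j.
  have g3 := E7 j.
  simpl in g1, g2, g3.
  lra.
exists (A1 `|` ~` A2 `|` Y1 `|` ~` Y2 `|` \big[setU/set0]_(j < m) F j); split.
- apply: measurableU => //; apply: measurableU; last by exact: measurableC.
  apply: measurableU => //; apply: measurableU => //; exact: measurableC.
- have mA2c : measurable (~` A2) by exact: measurableC.
  have mY2c : measurable (~` Y2) by exact: measurableC.
  have s1 := pr_U P (mU (mU (mU mA1 mA2c) mY1) mY2c) mBF.
  have s2 := pr_U P (mU (mU mA1 mA2c) mY1) mY2c.
  have s3 := pr_U P (mU mA1 mA2c) mY1.
  have s4 := pr_U P mA1 mA2c.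
  have s5 := pr_bigU P m mF.
  have s6 : \sum_(j < m) pr P (F j) <= \sum_(j < m) (6 * u).
    by apply: ler_sum => j _; exact: Fj.
  rewrite sumr_const card_ord in s6.
  have pA2 : pr P (~` A2) <= eta / 16 by rewrite pr_C //; lra.
  have s7 : (6 * u) *+ m = 6 * (eta / 16).
    by rewrite -mu16 -mulr_natr; ring.
  rewrite s7 in s6.
  have pA1 : pr P A1 <= eta / 16 by rewrite /A1; lra.
  have pY1 : pr P Y1 <= u by rewrite /Y1; lra.
  have m1 : (1 <= m%:R :> R) by rewrite ler1n.
  have ule : u <= eta / 16 by nra.
  lra.
- move=> w hw.
  have nA1 : ~ A1 w by move=> h; apply: hw; left; left; left; left.
  have nA2 : A2 w.
    by case: (boolP (C1 t w <= b%:E)%E) => // h; exfalso; apply: hw; left; left; left; right; exact/negP.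
  have nY1 : ~ Y1 w by move=> h; apply: hw; left; left; right.
  have nY2 : Y2 w.
    by case: (boolP (Y t w <= M2%:E)%E) => // h; exfalso; apply: hw; left; right; exact/negP.
  have nF : forall j : 'I_m, ~ F j w.
    move=> j h; apply: hw; right.
    rewrite -bigcup_mkord; exists j => //=.
  have [CB rel] := E9 w.
  move: nA1 nA2 rel; rewrite /A1 /A2 /=.
  case Ex: (C1 t w) => [x| |]; last 2 first.
  + by move=> _; rewrite leye_eq.
  + by rewrite leNye.
  move=> hxa hxb rel.
  have xa : a < x by rewrite ltNge; apply/negP => hx; apply: hxa; rewrite /= lee_fin.
  have xb : x <= b by move: hxb; rewrite lee_fin.
  have xb2 : x <= a + m%:R * hh by rewrite -bmh.
  have [j /andP[hj1 hj2]] := grid_index h0 xa xb2.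
  have Bj : (B t w <= (sn j)%:E)%E.
    case: (boolP (B t w <= (sn j)%:E)%E) => // hB; exfalso; apply: (nF j).
    split => /=; [by rewrite Ex lee_fin | by rewrite ltNge].
  apply: (pt2 CB (rel isT) E8 qM M1le M2ge nY1 nY2 _ Bj).
  + by apply/andP; split; [exact: hj1 | exact: hj2].
  + rewrite /sn; have : (j.+1)%:R = j%:R + 1 :> R by rewrite -natr1.
    move=> ->; lra.
Qed.


Lemma mono_disc (R : realType) (F : R -> R) (x : R) :
  {homo F : u v / u <= v} -> ~ {for x, continuous F} -> discontinuity F x.
Proof.
move=> ndF ncF.
have cl : cvg (F y @[y --> x^'-]).
  apply: nondecreasing_at_left_is_cvgr.
    by near=> z => u v _ _; exact: ndF.
  near=> z; exists (F x) => _ [y /= + <-]; rewrite in_itv /= => /andP[_ yx].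
  exact/ndF/ltW.
have cr : cvg (F y @[y --> x^'+]).
  apply: nondecreasing_at_right_is_cvgr.
    by near=> z => u v _ _; exact: ndF.
  near=> z; exists (F x) => _ [y /= + <-]; rewrite in_itv /= => /andP[xy _].
  exact/ndF/ltW.
split => //; apply/negP => /eqP e.
apply: ncF; apply/left_right_continuousP.
have l1 : lim (F y @[y --> x^'-]) <= F x.
  apply: limr_le => //; near=> y; apply/ndF/ltW; near: y; exact: nbhs_left_lt.
have l2 : F x <= lim (F y @[y --> x^'+]).
  apply: limr_ge => //; near=> y; apply/ndF/ltW; near: y; exact: nbhs_right_gt.
have ex : lim (F y @[y --> x^'-]) = F x by apply/le_anti; rewrite l1 e l2.
split.
  by rewrite -ex; exact: cl.
by rewrite -ex e; exact: cr.
Unshelve. all: end_near. Qed.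

Lemma dens (R : realType) (F : R -> R) (s dl : R) :
  {homo F : u v / u <= v} -> 0 < dl ->
  exists s', s < s' < s + dl /\ {for s', continuous F}.
Proof.
move=> ndF dl0.
apply: contrapT => hn.
have hall : forall x, x \in `]s, s + dl[ -> discontinuity F x.
  move=> x xi; have xi' : s < x < s + dl by move: xi; rewrite in_itv.
  apply: mono_disc => // cx; apply: hn; exists x; split => //.
have cnt := @discontinuity_countable R s (s + dl) F (fun u v (_ : u \in `[s, s + dl]) (_ : v \in `[s, s + dl]) => @ndF u v).
have eqS : [set x | x \in (`]s, s + dl[) /\ discontinuity F x] = [set` `]s, s + dl[ ].
  apply/seteqP; split => x /=; first by case.
  by move=> xi; split => //; exact: hall.
rewrite eqS in cnt.
have := countable_lebesgue_measure0 cnt.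
rewrite lebesgue_measure_itv /= lte_fin ltrDl dl0 => /eqP.
by rewrite -EFinB eqe addrAC subrr add0r gt_eqF.
Qed.


Lemma pw1 (R : realType) (x : \bar R) (b cc s eps : R) :
  cc <= b <= cc + eps -> (x - b%:E <= s%:E)%E -> (x - cc%:E <= (s + eps)%:E)%E.
Proof.
move=> /andP[h1 h2]; case: x => [x| |] //=.
- by rewrite -EFinB !lee_fin => h; lra.
- by move=> _; rewrite leNye.
Qed.

Lemma pw2 (R : realType) (x : \bar R) (b cc s : R) :
  cc <= b -> (x - cc%:E <= s%:E)%E -> (x - b%:E <= s%:E)%E.
Proof.
move=> h1; case: x => [x| |] //=.
by rewrite -!EFinB !lee_fin => h; lra.
Qed.

Lemma core2 d (T : measurableType d) (R : realType) (P : probability T R)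
  (A B C : R -> T -> \bar R) (D : probability R R) :
  (forall t, measurable_fun setT (A t)) -> (forall t, measurable_fun setT (B t)) ->
  (forall t, measurable_fun setT (C t)) ->
  (forall eps eta : R, 0 < eps -> 0 < eta ->
    \forall t \near +oo, exists U : set T, [/\ measurable U, pr P U <= eta &
     forall w, ~ U w -> exists b cc : R,
       [/\ B t w = b%:E, C t w = cc%:E & cc <= b <= cc + eps]]) ->
  cvg_distr P (fun t w => (A t w - C t w)%E) D ->
  cvg_distr P (fun t w => (A t w - B t w)%E) D.
Proof.
move=> mA mB mC hU hD s cs.
pose F (r : R) := fine (D `]-oo, r]%classic).
have DF : forall r : R, D `]-oo, r]%classic = (F r)%:E.
  by move=> r; rewrite (prE D) //.
have ndF : {homo F : u v / u <= v}.
  move=> u v uv; apply: (pr_le D) => //.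
  by move=> x /=; rewrite !in_itv /= => xu; exact: le_trans xu uv.
have mAB t s0 : measurable [set w | (A t w - B t w <= s0%:E)%E].
  exact: mle (emeasurable_funB (mA t) (mB t)).
have mAC t s0 : measurable [set w | (A t w - C t w <= s0%:E)%E].
  exact: mle (emeasurable_funB (mA t) (mC t)).
rewrite DF; apply/fine_cvgP; split.
  by apply: nearW => t; rewrite (prE P (mAB t s)).
apply/cvgrPdist_le => e e0.
have e4 : 0 < e / 4 by apply: divr_gt0.
have [dl [dl0 hdl]] : exists dl, 0 < dl /\ F (s + dl) <= F s + e / 4.
  move: (cs) => /cvgr_dist_lt/(_ _ e4) /nbhs0P h.
  have h' : \forall dl \near 0^'+, `|F s - F (s + dl)| < e / 4.
    by move: h; apply: filterS => x Px _.
  have [x [x0 hx]] := filter_ex (filterI (nbhs_right_gt 0) h').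
  exists x; split => //; move: hx; rewrite ltr_norml => /andP[h1 h2]; lra.
have [s' [/andP[ss' s'd] cs']] := dens s ndF dl0.
have Fs' : F s' <= F s + e / 4 by apply: le_trans (ndF _ _ (ltW s'd)) _.
have hDs := hD s cs; rewrite DF in hDs.
have hDs' := hD s' cs'; rewrite DF in hDs'.
have hD1 := pr_cvg (E := fun t => [set w | (A t w - C t w <= s%:E)%E])
  (fun t => mAC t s) hDs e4.
have hD2 := pr_cvg (E := fun t => [set w | (A t w - C t w <= s'%:E)%E])
  (fun t => mAC t s') hDs' e4.
have hU' := hU (s' - s) (e / 4) (ltac:(lra)) e4.
apply: (nearS _ (nearI hD1 (nearI hD2 hU'))).
move=> t [/andP[l1 u1] [/andP[l2 u2] [U [mU' pU hUw]]]].
have -> : (fine \o (fun t => P [set w | (A t w - B t w <= s%:E)%E])) t =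
  pr P [set w | (A t w - B t w <= s%:E)%E] by [].
have inc1 : [set w | (A t w - B t w <= s%:E)%E] `<=`
    [set w | (A t w - C t w <= s'%:E)%E] `|` U.
  move=> w /= hw; have [Uw|nUw] := pselect (U w); first by right.
  left; have [bb [cc [Bb Cc hbc]]] := hUw w nUw.
  rewrite Cc; move: hw; rewrite Bb => hw.
  have e1 : s + (s' - s) = s' by ring.
  by have := pw1 hbc hw; rewrite e1.
have inc2 : [set w | (A t w - C t w <= s%:E)%E] `<=`
    [set w | (A t w - B t w <= s%:E)%E] `|` U.
  move=> w /= hw; have [Uw|nUw] := pselect (U w); first by right.
  left; have [bb [cc [Bb Cc /andP[hbc _]]]] := hUw w nUw.
  rewrite Bb; move: hw; rewrite Cc => hw.
  exact: pw2 hbc hw.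
have i1 := pr_le P (mAB t s) (mU (mAC t s') mU') inc1.
have i2 := pr_le P (mAC t s) (mU (mAB t s) mU') inc2.
have i3 := pr_U P (mAC t s') mU'.
have i4 := pr_U P (mAB t s) mU'.
rewrite ler_norml; apply/andP; split; lra.
Qed.


Lemma LPP_meas d (T : measurableType d) (R : realType) (om : int * int -> T -> R)
  (SA SE : set (int * int)) :
  (forall z, measurable_fun setT (om z)) ->
  measurable_fun setT (fun w => LPP (fun z => om z w) SA SE).
Proof.
move=> mom.
pose cond (p : (int * int) * seq (int * int)) : Prop :=
  [/\ SA p.1, path up_right_step p.1 p.2 & SE (last p.1 p.2)].
pose val (p : (int * int) * seq (int * int)) w :=
  (\sum_(q <- p.1 :: p.2 | q \notin SA) om q w).
pose f (n : nat) (w : T) : \bar R := match unpickle n with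
  | Some p => if `[< cond p >] then (val p w)%:E else -oo%E
  | None => -oo%E end.
have mf : forall n, measurable_fun setT (f n).
  move=> n; rewrite /f; case: (unpickle n) => [p|]; last exact: measurable_cst.
  case: `[< cond p >]; last exact: measurable_cst.
  apply/measurable_EFinP; rewrite /val.
  have -> : (fun w => \sum_(q <- p.1 :: p.2 | q \notin SA) om q w) =
    (fun w => \sum_(q <- p.1 :: p.2) (if q \notin SA then om q w else 0)).
    by apply/funext => w; rewrite big_mkcond.
  apply: measurable_sum => q; case: (q \notin SA); last exact: measurable_cst.
  exact: mom.
have -> : (fun w => LPP (fun z => om z w) SA SE) = (fun w => esups (f^~ w) 0).
  apply/funext => w; rewrite /LPP /esups /=.
  apply/le_anti/andP; split.
    apply: le_ereal_sup => y [a [s [h1 h2 h3 ->]]].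
    exists (pickle (a, s)) => //.
    rewrite /f pickleK; have -> : `[< cond (a, s) >] = true by apply/asboolP.
    by [].
  apply: ge_ereal_sup => y [k _ <-]; rewrite /f.
  case: (unpickle k) => [[a s]|]; last exact: leNye.
  case: asboolP => [[h1 h2 h3]|_]; last exact: leNye.
  by apply: ereal_sup_ubound; exists a, s; split.
exact: measurable_fun_esups.
Qed.

Lemma path_ge (e : int * int) (s : seq (int * int)) :
  path up_right_step e s -> forall q, q \in s ->
  (e.1 <= q.1)%R /\ (e.1 + e.2 < q.1 + q.2)%R.
Proof.
elim: s e => [|q0 s IH] e //= /andP[st ps] q.
have h0 : (e.1 <= q0.1)%R /\ (e.1 + e.2 < q0.1 + q0.2)%R.
  move: st; rewrite /up_right_step => /orP[] /eqP -> /=; split; lia.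
rewrite in_cons => /orP[/eqP -> //|qs].
have [h1 h2] := IH _ ps q qs.
case: h0 => h3 h4; split; [exact: le_trans h3 h1 | exact: lt_trans h4 h2].
Qed.

Lemma esup_add (R : realType) (S1 S2 S3 : set (\bar R)) :
  (forall y1 y2, S1 y1 -> S2 y2 -> S3 (y1 + y2)%E) ->
  (forall y, S1 y -> y \is a fin_num) -> (forall y, S2 y -> y \is a fin_num) ->
  (ereal_sup S1 + ereal_sup S2 <= ereal_sup S3)%E.
Proof.
move=> h f1 f2.
have [S1e|S1ne] := pselect (exists y, S1 y); last first.
  have -> : S1 = set0 by apply/seteqP; split => y // hy; exfalso; apply: S1ne; exists y.
  by rewrite ereal_sup0 addNye leNye.
have [S2e|S2ne] := pselect (exists y, S2 y); last first.
  have -> : S2 = set0 by apply/seteqP; split => y // hy; exfalso; apply: S2ne; exists y.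
  by rewrite ereal_sup0 addeNy leNye.
case: S1e => y1 hy1; case: S2e => y2 hy2.
have hy12 := h _ _ hy1 hy2.
have lo : (y1 + y2 <= ereal_sup S3)%E by exact: ereal_sup_ubound.
case E3: (ereal_sup S3) => [m| |]; last 2 first.
- by rewrite leey.
- move: lo; rewrite E3 leeNy_eq => /eqP.
  have := f1 _ hy1; have := f2 _ hy2.
  by case: y1 {hy1 hy12} => // ?; case: y2 {hy2} => // ?.
have ub1 : forall r2, S2 r2%:E -> (ereal_sup S1 <= (m - r2)%:E)%E.
  move=> r2 hr2; apply: ge_ereal_sup => y hy.
  have := f1 _ hy; case: y hy => // r1 hr1 _.
  have : ((r1 + r2)%:E <= m%:E)%E by rewrite -E3; exact: ereal_sup_ubound (h _ _ hr1 hr2).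
  by rewrite !lee_fin => ?; lra.
have [r2 Er2] : exists r2, y2 = r2%:E by move: (f2 _ hy2); case: (y2) => // r _; exists r.
have [r1 Er1] : exists r1, y1 = r1%:E by move: (f1 _ hy1); case: (y1) => // r _; exists r.
rewrite Er2 in hy2; rewrite Er1 in hy1.
have l1 : (r1%:E <= ereal_sup S1)%E by exact: ereal_sup_ubound.
have u1 := ub1 _ hy2.
case E1: (ereal_sup S1) l1 u1 => [s1| |] // _ _.
have ub2 : (ereal_sup S2 <= (m - s1)%:E)%E.
  apply: ge_ereal_sup => y hy.
  have := f2 _ hy; case: y hy => // q2 hq2 _.
  have := ub1 _ hq2; rewrite E1 !lee_fin => ?; lra.
have l2 : (r2%:E <= ereal_sup S2)%E by exact: ereal_sup_ubound.
case E2: (ereal_sup S2) l2 ub2 => [s2| |] // _.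
by rewrite -EFinD !lee_fin => ?; lra.
Qed.

Lemma LPP_super (R : realType) (om : int * int -> R) (SA : set (int * int))
  (E F : int * int) :
  (forall q, SA q -> (q.1 < E.1)%R) ->
  (LPP om SA [set E] + LPP om [set E] [set F] <= LPP om SA [set F])%E.
Proof.
move=> hSA; rewrite /LPP; apply: esup_add; last 2 first.
- by move=> _ [a [s [_ _ _ ->]]].
- by move=> _ [a [s [_ _ _ ->]]].
move=> _ _ [a [s1 [h1 h2 h3 ->]]] [e [s2 [h4 h5 h6 ->]]].
rewrite /= in h3 h4 h6.
rewrite h4 in h5 h6.
exists a, (s1 ++ s2); split => //.
- by rewrite cat_path h2 h3.
- by rewrite /= last_cat h3.
rewrite -EFinD; congr EFin.
rewrite -cat_cons big_cat /=; congr (_ + _).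
rewrite h4 big_cons.
have -> : (E \notin [set E]) = false by apply/negbTE; rewrite negbK; exact: mem_set.
rewrite big_seq_cond [RHS]big_seq_cond; apply: eq_bigl => q.
case qs: (q \in s2) => //=.
have [g1 g2] := path_ge h5 qs.
have -> : (q \notin [set E]) = true.
  apply/negP => /set_mem /= qE; by rewrite qE ltxx in g2.
have -> : (q \notin SA) = true.
  apply/negP => /set_mem /hSA h; have := le_lt_trans g1 h; by rewrite ltxx.
by [].
Qed.

Lemma Lplus_neg (x : int -> int) :
  (forall k, x (k + 1) < x k) -> x 1 < -1 -> forall q, Lplus x q -> (q.1 < 0)%R.
Proof.
move=> hx hx1 q [k [k0 ->]] /=.
have key : forall n : nat, (n.+1)%:Z + x (n.+1)%:Z <= 1 + x 1.
  elim => [|n IH]; first by [].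
  have h := hx (n.+1)%:Z.
  have e : (n.+1)%:Z + 1 = (n.+2)%:Z by rewrite -PoszD addn1.
  rewrite e in h.
  have e2 : (n.+2)%:Z = (n.+1)%:Z + 1 by [].
  move: IH h; set A := x (n.+1)%:Z; set B := x (n.+2)%:Z => IH h.
  rewrite e2; lia.
case: k k0 => [n|n] // n0.
case: n n0 => [|n] // _.
have := key n; lia.
Qed.


Lemma powR_to0 (R : realType) (p : R) : 0 < p -> t `^ (- p) @[t --> +oo] --> 0.
Proof.
move=> p0; apply/cvgrPdist_lt => e e0.
pose T0 := (2 / e) `^ (p^-1).
have T00 : 0 < T0 by apply: powR_gt0; apply: divr_gt0.
near=> t.
have tT : T0 <= t by near: t; apply: nbhs_pinfty_ge; exact: num_real.
have t0 : 0 < t by exact: lt_le_trans T00 tT.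
rewrite sub0r normrN ger0_norm ?powR_ge0 // powRN.
have h : 2 / e <= t `^ p.
  have -> : 2 / e = T0 `^ p.
    rewrite /T0 -powRrM mulVf ?gt_eqF // powRr1 //.
    by apply: divr_ge0 => //; exact: ltW.
  by apply: ge0_ler_powR => //; [exact: ltW | rewrite nnegrE ltW | rewrite nnegrE ltW].
have tp0 : 0 < t `^ p by apply: powR_gt0.
rewrite -[e in _ < e](invrK e) ltf_pV2 ?posrE ?invr_gt0 //.
apply: lt_le_trans h.
have ie : 0 < e^-1 by rewrite invr_gt0.
lra.
Unshelve. all: end_near. Qed.

Lemma small_near (R : realType) (p k : R) : 0 < p -> 0 < k ->
  \forall t \near +oo, `|t `^ (- p)| < k.
Proof.
move=> p0 k0; move: (powR_to0 p0) => /cvgr_dist_lt/(_ _ k0).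
by apply: filterS => t; rewrite sub0r normrN.
Qed.

Lemma Eplus_ge0 (R : realType) (eta0 u kappa nu : R) :
  0 < eta0 -> nu < 1 ->
  \forall t \near +oo, (0 <= (Eplus eta0 u kappa nu t).1)%R.
Proof.
move=> e0 nu1.
have k1 : 0 < eta0 / (4 * (`|u| + 1)) by apply: divr_gt0 => //; apply: mulr_gt0 => //; rewrite ltr_pwDr.
have k2 : 0 < eta0 / (4 * (`|kappa| + 1)) by apply: divr_gt0 => //; apply: mulr_gt0 => //; rewrite ltr_pwDr.
have N1 := small_near (ltac:(lra) : 0 < 2 / 3 :> R) k1.
have N2 := small_near (ltac:(lra) : 0 < 1 - nu) k2.
near=> t.
have t1 : 1 <= t by near: t; apply: nbhs_pinfty_ge; exact: num_real.
have t0 : 0 < t by lra.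
rewrite /Eplus /ipt /= floor_ge0 /eta_t.
have a1 : `|t `^ (- (2 / 3))| < eta0 / (4 * (`|u| + 1)) by near: t.
have a2 : `|t `^ (- (1 - nu))| < eta0 / (4 * (`|kappa| + 1)) by near: t.
have tnu : t `^ nu = t `^ (- (1 - nu)) * t.
  have := @powRD R t (- (1 - nu)) 1; rewrite powRr1; last exact: ltW.
  move=> <-; last by apply/implyP => _; rewrite gt_eqF.
  by congr (_ `^ _); ring.
rewrite tnu.
set a := t `^ (- (2 / 3)) in a1 *.
set b := t `^ (- (1 - nu)) in a2 *.
have ua : `|u * a| <= eta0 / 4.
  rewrite normrM; move: a1; rewrite ltr_pdivlMr; last by apply: mulr_gt0 => //; rewrite ltr_pwDr.
  move=> a1; have := normr_ge0 u; have := normr_ge0 a; nra.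
have kb : `|kappa * b| <= eta0 / 4.
  rewrite normrM; move: a2; rewrite ltr_pdivlMr; last by apply: mulr_gt0 => //; rewrite ltr_pwDr.
  move=> a2; have := normr_ge0 kappa; have := normr_ge0 b; nra.
move: ua kb; rewrite !ler_norml => /andP[ua1 ua2] /andP[kb1 kb2].
nra.
Unshelve. all: end_near. Qed.

Lemma c_to0 (R : realType) (nu : R) : nu < 1 ->
  (t `^ (nu / 3) / t `^ (3^-1)) @[t --> +oo] --> 0.
Proof.
move=> nu1.
have p0 : 0 < (1 - nu) / 3 by apply: divr_gt0; lra.
apply: cvg_trans (powR_to0 p0).
apply: near_eq_cvg; near=> t.
have t0 : 0 < t by near: t; apply: nbhs_pinfty_gt; exact: num_real.
rewrite -powRB; last by apply/implyP => _; rewrite gt_eqF.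
by congr (_ `^ _); field.
Unshelve. all: end_near. Qed.


Lemma rescale_meas d (T : measurableType d) (R : realType) (a t c : R) (X : T -> \bar R) :
  measurable_fun setT X -> measurable_fun setT (fun w => rescale a t c (X w)).
Proof.
move=> mX; rewrite /rescale.
apply: (@emeasurable_funM _ _ _ _ (fun w => X w - c%:E)%E (fun=> ((t `^ a)^-1)%:E)).
  by apply: emeasurable_funB => //; exact: measurable_cst.
exact: measurable_cst.
Qed.

Lemma rescale_le (R : realType) (a t c : R) (X Y : \bar R) : 0 < t ->
  (X <= Y)%E -> (rescale a t c X <= rescale a t c Y)%E.
Proof.
move=> t0 XY; rewrite /rescale; apply: lee_wpmul2r.
  by rewrite lee_fin invr_ge0 powR_ge0.
exact: leeB.
Qed.

Lemma rescale_fin (R : realType) (a t c : R) (X : \bar R) : 0 < t ->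
  rescale a t c X \is a fin_num -> exists x, X = x%:E.
Proof.
move=> t0; have r0 : 0 < (t `^ a)^-1 by rewrite invr_gt0 powR_gt0.
case: X => [x| |]; first by exists x.
- by rewrite /rescale /= gt0_mulye ?lte_fin.
- by rewrite /rescale /= gt0_mulNye ?lte_fin.
Qed.

Lemma rescale_rel (R : realType) (L1 L2 : \bar R) (t mu mu0 nu : R) : 0 < t ->
  rescale (3^-1) t (mu * t - mu0 * t `^ nu) L1 \is a fin_num ->
  rescale (nu / 3) t (mu0 * t `^ nu) L2 \is a fin_num ->
  rescale (3^-1) t (mu * t) (L1 + L2)%E =
  (rescale (3^-1) t (mu * t - mu0 * t `^ nu) L1 +
   (t `^ (nu / 3) / t `^ (3^-1))%:E * rescale (nu / 3) t (mu0 * t `^ nu) L2)%E.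
Proof.
move=> t0 h1 h2.
have [l1 ->] := rescale_fin t0 h1.
have [l2 ->] := rescale_fin t0 h2.
rewrite /rescale -EFinD -!EFinB -!EFinM -EFinD; congr EFin.
have p1 : t `^ (3^-1) != 0 by rewrite gt_eqF // powR_gt0.
have p2 : t `^ (nu / 3) != 0 by rewrite gt_eqF // powR_gt0.
move: p1 p2; set a1 := t `^ 3^-1; set b1 := t `^ (nu / 3); set g1 := t `^ nu => p1 p2.
have -> : b1 / a1 * ((l2 - mu0 * g1) / b1) = (l2 - mu0 * g1) / a1.
  rewrite mulrC -!mulrA; congr (_ * _).
  by rewrite mulrA mulVf // mul1r.
rewrite -mulrDl; congr (_ * _); ring.
Qed.

Unset Implicit Arguments.

Theorem proposition2p6 (R : realType) (d : measure_display)
  (T : measurableType d) (P : probability T R)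
  (* initial configuration x_k(0) *)
  (x : int -> int)
  (hx_dec : forall k : int, x (k + 1) < x k)
  (hx0 : x 0 = 1) (hx1 : x 1 < -1)
  (* independent exponential weights of rate v_j *)
  (v : int -> R) (hv : forall j, 0 < v j)
  (omega : int * int -> {RV P >-> R})
  (hind : mutually_independent P (fun z => (omega z : T -> R)))
  (hexp : forall (z : int * int) (A : set R), measurable A ->
     distribution P (omega z) A = exponential_prob (v z.2) A)
  (* parameters *)
  (eta0 u : R) (heta0 : 0 < eta0)
  (* Assumption A1 *)
  (mu : R) (G1 G2 : R -> R)
  (hG1 : cont_distr_fun G1) (hG2 : cont_distr_fun G2)
  (A1p : forall s : R,
     (fun t => P [set w | (rescale (3^-1) t (mu * t)
        (LPP (fun z => omega z w) (Lplus x) [set endpt eta0 u t]) <= s%:E)%E])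
       @ +oo --> (G1 s)%:E)
  (A1m : forall s : R,
     (fun t => P [set w | (rescale (3^-1) t (mu * t)
        (LPP (fun z => omega z w) (Lminus x) [set endpt eta0 u t]) <= s%:E)%E])
       @ +oo --> (G2 s)%:E)
  (* Assumption A2 *)
  (kappa mu0 nu : R) (hnu : 3^-1 < nu < 1) (G0 : R -> R)
  (hG0 : cont_distr_fun G0)
  (A2a : forall s : R,
     (fun t => P [set w | (rescale (nu / 3) t (mu0 * t `^ nu)
        (LPP (fun z => omega z w) [set Eplus eta0 u kappa nu t]
             [set endpt eta0 u t]) <= s%:E)%E])
       @ +oo --> (G0 s)%:E)
  (A2b : forall s : R,
     (fun t => P [set w | (rescale (3^-1) t (mu * t - mu0 * t `^ nu)
        (LPP (fun z => omega z w) (Lplus x) [set Eplus eta0 u kappa nu t])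
          <= s%:E)%E])
       @ +oo --> (G1 s)%:E)
  (* the limit distribution D *)
  (D : probability R R)
  (hD : cvg_distr P (fun t w =>
      (rescale (3^-1) t (mu * t)
         (LPP (fun z => omega z w) (Lminus x) [set endpt eta0 u t])
       - rescale (3^-1) t (mu * t)
         (LPP (fun z => omega z w) (Lplus x) [set Eplus eta0 u kappa nu t]
          + LPP (fun z => omega z w) [set Eplus eta0 u kappa nu t]
                [set endpt eta0 u t]))%E) D) :
  cvg_distr P (fun t w =>
      (rescale (3^-1) t (mu * t)
         (LPP (fun z => omega z w) (Lminus x) [set endpt eta0 u t])
       - rescale (3^-1) t (mu * t)
         (LPP (fun z => omega z w) (Lplus x) [set endpt eta0 u t]))%E) D.
Proof.
have mom : forall z, measurable_fun setT (omega z : T -> R).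
  by move=> z; exact: measurable_funP.
case/andP: hnu => hnu1 hnu2.
apply: (core2 (C := fun t w => rescale (3^-1) t (mu * t)
   (LPP (fun z => omega z w) (Lplus x) [set Eplus eta0 u kappa nu t]
    + LPP (fun z => omega z w) [set Eplus eta0 u kappa nu t] [set endpt eta0 u t])%E)
   _ _ _ _ hD).
- by move=> t; apply: rescale_meas; exact: LPP_meas.
- by move=> t; apply: rescale_meas; exact: LPP_meas.
- move=> t; apply: rescale_meas.
  by apply: emeasurable_funD; exact: LPP_meas.
move=> eps eta e0 et0.
apply: (core1 (C1 := fun t w => rescale (3^-1) t (mu * t - mu0 * t `^ nu)
          (LPP (fun z => omega z w) (Lplus x) [set Eplus eta0 u kappa nu t]))
   (Y := fun t w => rescale (nu / 3) t (mu0 * t `^ nu)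
          (LPP (fun z => omega z w) [set Eplus eta0 u kappa nu t] [set endpt eta0 u t]))
   (c := fun t => t `^ (nu / 3) / t `^ (3^-1)) hG0 hG1 _ _ _ A1p A2b A2a _ _ e0 et0).
- by move=> t; apply: rescale_meas; exact: LPP_meas.
- by move=> t; apply: rescale_meas; exact: LPP_meas.
- by move=> t; apply: rescale_meas; exact: LPP_meas.
- exact: c_to0.
apply: (nearS _ (nearI (Eplus_ge0 u kappa heta0 hnu2)
   (nbhs_pinfty_gt (num_real (0 : R))))).
move=> t [hE t0] w; split.
- apply: rescale_le => //; apply: LPP_super => q hq.
  exact: lt_le_trans (Lplus_neg hx_dec hx1 hq) hE.
- by move=> f1 f2; exact: rescale_rel.
Qed.
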